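(* Let $\Lambda$ be a block and $\lambda\in\Lambda$. (i) The number of weights $\mu$ with $\mu\supset\lambda$ is $2^{\mathrm{def}(\lambda)}$. (ii) The number of weights $\mu$ with $\mu\subset\lambda$ is finite if and only if $\mathrm{def}(\Lambda)<\infty$. (iii) For each $j\in\mathbb Z$, the number of weights $\mu$ with $\mu\subset\lambda$ and $\deg(\underline\mu\lambda)=j$ is finite.
   Context: A number line carries vertices indexed by consecutive integers (finitely or infinitely many). A weight labels each vertex by $\circ,\times,\vee,\wedge$ such that outside a finite set no $\vee$ is left of an $\wedge$. $\lambda\sim\mu$ if $\mu$ is obtained from $\lambda$ by permuting $\vee$'s and $\wedge$'s; equivalence classes are blocks. A cup diagram consists of finitely many non-crossing cups joining pairs of vertices and rays down to infinity. $c\lambda$ is an oriented cup diagram if free vertices are $\circ/\times$, each cup has one $\vee$ and one $\wedge$ end, ray vertices are $\vee/\wedge$, and no two rays are labelled $\vee,\wedge$ in that order left to right; its degree is its number of clockwise cups (left end labelled $\wedge$). $\underline\lambda$ is the unique cup diagram with $\underline\lambda\lambda$ oriented of degree $0$. $\mu\subset\lambda$ (also written $\lambda\supset\mu$) means $\mu\sim\lambda$ and $\underline\mu\lambda$ is oriented. $\mathrm{def}(\lambda)$ is the number of cups of $\underline\lambda$, and $\mathrm{def}(\Lambda)=\sup_{\lambda\in\Lambda}\mathrm{def}(\lambda)\in\{0,1,2,\dots\}\cup\{\infty\}$. *)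

(* Defs.v *)
From Stdlib Require Import ZArith List ClassicalEpsilon.
Import ListNotations.
Open Scope Z_scope.

Inductive lab := Circ | Cross | Vee | Wedge.

Definition number_line (I : Z -> Prop) : Prop :=
  forall i j k, i <= j <= k -> I i -> I k -> I j.

(* A weight on the number line I.  Positions outside I carry the dummy
   label Circ, so that a weight is a single canonical function Z -> lab. *)
Definition is_weight (I : Z -> Prop) (la : Z -> lab) : Prop :=
  (forall i, ~ I i -> la i = Circ) /\
  exists F : list Z, forall i j, i < j -> ~ In i F -> ~ In j F ->
    ~ (la i = Vee /\ la j = Wedge).

Definition is_vw (x : lab) : Prop := x = Vee \/ x = Wedge.

Definition sim (la mu : Z -> lab) : Prop :=
  exists sigma tau : Z -> Z,
    (forall i, sigma (tau i) = i /\ tau (sigma i) = i) /\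
    (exists s : list Z, forall i, ~ In i s -> sigma i = i) /\
    (forall i, sigma i <> i -> is_vw (la i)) /\
    (forall i, mu i = la (sigma i)).

Record cupdiag := CupDiag { cups : list (Z * Z); ray : Z -> Prop }.

Definition endpoints (c : cupdiag) : list Z :=
  flat_map (fun p => [fst p; snd p]) (cups c).

Definition is_cupdiag (I : Z -> Prop) (c : cupdiag) : Prop :=
  (forall p, In p (cups c) -> fst p < snd p /\ I (fst p) /\ I (snd p)) /\
  NoDup (endpoints c) /\
  (forall p q, In p (cups c) -> In q (cups c) ->
     ~ (fst p < fst q < snd p /\ snd p < snd q)) /\
  (forall k, ray c k ->
     I k /\ ~ In k (endpoints c) /\
     forall p, In p (cups c) -> ~ (fst p < k < snd p)).

Definition oriented (c : cupdiag) (la : Z -> lab) : Prop :=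
  (forall k, ~ In k (endpoints c) -> ~ ray c k -> la k = Circ \/ la k = Cross) /\
  (forall p, In p (cups c) ->
     (la (fst p) = Vee /\ la (snd p) = Wedge) \/
     (la (fst p) = Wedge /\ la (snd p) = Vee)) /\
  (forall k, ray c k -> is_vw (la k)) /\
  (forall k l, k < l -> ray c k -> ray c l -> ~ (la k = Vee /\ la l = Wedge)).

Definition is_wedgeb (x : lab) : bool := match x with Wedge => true | _ => false end.

(* Degree of c la: number of clockwise cups (left end labelled ∧). *)
Definition degree (c : cupdiag) (la : Z -> lab) : nat :=
  length (filter (fun p => is_wedgeb (la (fst p))) (cups c)).

Definition is_underline (I : Z -> Prop) (la : Z -> lab) (c : cupdiag) : Prop :=
  is_cupdiag I c /\ oriented c la /\ degree c la = 0%nat.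

(* mu ⊂ la  (equivalently la ⊃ mu). *)
Definition subw (I : Z -> Prop) (mu la : Z -> lab) : Prop :=
  sim mu la /\ exists c, is_underline I mu c /\ oriented c la.

Definition defect (I : Z -> Prop) (la : Z -> lab) : nat :=
  epsilon (inhabits 0%nat)
    (fun n => exists c, is_underline I la c /\ length (cups c) = n).

(* def(Λ) < ∞ for the block Λ of la. *)
Definition block_defect_finite (I : Z -> Prop) (la : Z -> lab) : Prop :=
  exists N : nat, forall mu, is_weight I mu -> sim la mu -> (defect I mu <= N)%nat.

Definition finite_set {X : Type} (P : X -> Prop) : Prop :=
  exists l : list X, forall x, P x -> In x l.

Definition has_card {X : Type} (P : X -> Prop) (n : nat) : Prop :=
  exists l : list X, NoDup l /\ (forall x, P x <-> In x l) /\ length l = n.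

(* Main.v *)
Require Import Defs.
From Stdlib Require Import ZArith List Permutation Lia ClassicalEpsilon FunctionalExtensionality Classical.
Import ListNotations.
Open Scope Z_scope.


Definition dec (P : Prop) : bool := if excluded_middle_informative P then true else false.
Lemma dec_true P : dec P = true <-> P.
Proof. unfold dec; destruct excluded_middle_informative; split; intros; try tauto; congruence. Qed.
Lemma dec_false P : dec P = false <-> ~ P.
Proof. unfold dec; destruct excluded_middle_informative; split; intros; try tauto; congruence. Qed.

Lemma decT P : dec P = true -> P. Proof. apply dec_true. Qed.
Lemma decF P : dec P = false -> ~ P. Proof. apply dec_false. Qed.
Lemma decT' (P : Prop) : P -> dec P = true. Proof. apply dec_true. Qed.
Lemma decF' (P : Prop) : ~ P -> dec P = false. Proof. apply dec_false. Qed.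

Definition cnt {A} (P : A -> Prop) (l : list A) : nat := length (filter (fun x => dec (P x)) l).

Lemma cnt_cons {A} (P : A -> Prop) x l :
  cnt P (x :: l) = ((if dec (P x) then 1 else 0) + cnt P l)%nat.
Proof. unfold cnt; simpl; destruct (dec (P x)); reflexivity. Qed.

Lemma cnt_perm {A} (P : A -> Prop) l l' : Permutation l l' -> cnt P l = cnt P l'.
Proof. intro H; induction H; rewrite ?cnt_cons; try lia.
  all: destruct (dec (P x)), (dec (P y)); lia. Qed.

Lemma cnt_map {A B} (P : B -> Prop) (f : A -> B) l : cnt P (map f l) = cnt (fun x => P (f x)) l.
Proof. induction l; simpl; rewrite ?cnt_cons; auto. Qed.

Lemma cnt_le {A} (P Q : A -> Prop) l : (forall x, In x l -> P x -> Q x) -> (cnt P l <= cnt Q l)%nat.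
Proof. induction l; intros H; simpl; [unfold cnt; simpl; lia|]. rewrite !cnt_cons.
  assert (IH := IHl (fun x Hx => H x (or_intror Hx))).
  destruct (dec (P a)) eqn:E1; destruct (dec (Q a)) eqn:E2; try lia.
  apply decT in E1; apply decF in E2. exfalso; apply E2; apply H; simpl; auto. Qed.

Lemma cnt_ext {A} (P Q : A -> Prop) l : (forall x, In x l -> (P x <-> Q x)) -> cnt P l = cnt Q l.
Proof. intros H; apply Nat.le_antisymm; apply cnt_le; intros x Hx; apply H; auto. Qed.

Lemma cnt_lt {A} (P Q : A -> Prop) l : (forall x, In x l -> P x -> Q x) ->
  (exists x, In x l /\ Q x /\ ~ P x) -> (cnt P l < cnt Q l)%nat.
Proof. induction l; intros H [x [Hx [HQ HP]]]; [destruct Hx|]. rewrite !cnt_cons.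
  destruct Hx as [Ha|Hx].
  - subst a. assert (cnt P l <= cnt Q l)%nat by (apply cnt_le; intros; apply H; simpl; auto).
    destruct (dec (P x)) eqn:E1; destruct (dec (Q x)) eqn:E2; try lia.
    all: repeat match goal with H: dec _ = true |- _ => apply decT in H | H: dec _ = false |- _ => apply decF in H end; tauto.
  - assert (cnt P l < cnt Q l)%nat by (apply IHl; [intros; apply H; simpl; auto| eauto]).
    destruct (dec (P a)) eqn:E1; destruct (dec (Q a)) eqn:E2; try lia.
    apply decT in E1; apply decF in E2. exfalso; apply E2; apply H; simpl; auto. Qed.

Lemma cnt_split {A} (P Q : A -> Prop) l : cnt P l = (cnt (fun x => P x /\ Q x) l + cnt (fun x => P x /\ ~ Q x) l)%nat.
Proof. induction l; [reflexivity|]. rewrite !cnt_cons, IHl.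
  destruct (dec (P a)) eqn:E1; destruct (dec (P a /\ Q a)) eqn:E2; destruct (dec (P a /\ ~ Q a)) eqn:E3;
  repeat match goal with H: dec _ = true |- _ => apply decT in H | H: dec _ = false |- _ => apply decF in H end; try tauto; try lia. Qed.

Lemma nodup_le_cnt {A} (P : A -> Prop) (L l : list A) : NoDup L -> (forall x, In x L -> In x l /\ P x) ->
  (length L <= cnt P l)%nat.
Proof. intros HL H. unfold cnt. apply NoDup_incl_length; auto. intros x Hx.
  apply filter_In. destruct (H x Hx). split; auto. apply decT'; auto. Qed.

Lemma cnt_le_incl {A} (P : A -> Prop) (l L : list A) : NoDup l -> (forall x, In x l -> P x -> In x L) ->
  (cnt P l <= length L)%nat.
Proof. intros Hl H. unfold cnt. apply NoDup_incl_length. apply NoDup_filter; auto.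
  intros x Hx. apply filter_In in Hx. destruct Hx as [Hx Hp]. apply decT in Hp. auto. Qed.

Lemma cnt_nil {A} (P : A -> Prop) : cnt P [] = 0%nat.
Proof. reflexivity. Qed.

Lemma cnt_app {A} (P : A -> Prop) l l' : cnt P (l ++ l') = (cnt P l + cnt P l')%nat.
Proof. unfold cnt; rewrite filter_app, length_app; auto. Qed.

Lemma cnt_filter {A} (P Q : A -> Prop) l : cnt (fun x => P x /\ Q x) l = cnt P (filter (fun x => dec (Q x)) l).
Proof. induction l; [reflexivity|]. simpl. destruct (dec (Q a)) eqn:E; rewrite ?cnt_cons, IHl;
  destruct (dec (P a /\ Q a)) eqn:E2; destruct (dec (P a)) eqn:E3; repeat match goal with H: dec _ = true |- _ => apply decT in H | H: dec _ = false |- _ => apply decF in H end; tauto || lia. Qed.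


Definition swapf (a b : Z) (m : Z -> lab) : Z -> lab :=
  fun k => if Z.eq_dec k a then m b else if Z.eq_dec k b then m a else m k.
Definition upd (m : Z -> lab) (x : Z) (v : lab) : Z -> lab :=
  fun k => if Z.eq_dec k x then v else m k.

Lemma swapf_a a b m : swapf a b m a = m b.
Proof. unfold swapf; destruct Z.eq_dec; congruence. Qed.
Lemma swapf_b a b m : swapf a b m b = m a.
Proof. unfold swapf; repeat destruct Z.eq_dec; congruence. Qed.
Lemma swapf_o a b m k : k <> a -> k <> b -> swapf a b m k = m k.
Proof. unfold swapf; repeat destruct Z.eq_dec; congruence. Qed.
Lemma swapf_inv a b m : swapf a b (swapf a b m) = m.
Proof. apply functional_extensionality; intro k; unfold swapf; repeat destruct Z.eq_dec; congruence. Qed.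

Lemma In_endpoints x cs : In x (endpoints (CupDiag cs (fun _ => False))) <-> exists p, In p cs /\ (x = fst p \/ x = snd p).
Proof. unfold endpoints; simpl. rewrite in_flat_map. split; intros [p [H1 H2]]; exists p; simpl in *; intuition. Qed.

Lemma In_ep c x : In x (endpoints c) <-> exists p, In p (cups c) /\ (x = fst p \/ x = snd p).
Proof. unfold endpoints. rewrite in_flat_map. split; intros [p [H1 H2]]; exists p; simpl in *; intuition. Qed.

Definition eps (cs : list (Z*Z)) : list Z := flat_map (fun p => [fst p; snd p]) cs.
Lemma eps_ep c : endpoints c = eps (cups c). Proof. reflexivity. Qed.
Lemma In_eps x cs : In x (eps cs) <-> exists p, In p cs /\ (x = fst p \/ x = snd p).
Proof. unfold eps. rewrite in_flat_map. split; intros [p [H1 H2]]; exists p; simpl in *; intuition. Qed.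
Lemma eps_length cs : length (eps cs) = (2 * length cs)%nat.
Proof. induction cs; simpl; auto. rewrite IHcs. lia. Qed.

Lemma cup_eq cs p q : NoDup (eps cs) -> In p cs -> In q cs ->
  (fst p = fst q \/ snd p = snd q \/ fst p = snd q \/ snd p = fst q) -> p = q.
Proof.
  induction cs as [|a cs IH]; intros ND Hp Hq E; [destruct Hp|]. simpl in ND.
  inversion ND as [|? ? N1 ND1]; subst. inversion ND1 as [|? ? N2 ND2]; subst.
  assert (Hin : forall r, In r cs -> In (fst r) (eps cs) /\ In (snd r) (eps cs)).
  { intros r Hr; split; apply In_eps; exists r; auto. }
  destruct Hp as [<-|Hp]; destruct Hq as [<-|Hq]; auto.
  - exfalso. destruct (Hin q Hq). simpl in N1, N2. intuition (try congruence).
    all: try (rewrite H2 in N1; tauto); try (rewrite H2 in N2; tauto).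
  - exfalso. destruct (Hin p Hp). simpl in N1, N2. intuition (try congruence).
    all: try (rewrite <- H2 in N1; tauto); try (rewrite <- H2 in N2; tauto).
Qed.

Lemma NoDup_eps_filter f cs : NoDup (eps cs) -> NoDup (eps (filter f cs)).
Proof.
  induction cs as [|a cs IH]; simpl; auto. intros ND.
  inversion ND as [|? ? N1 ND1]; subst. inversion ND1 as [|? ? N2 ND2]; subst.
  destruct (f a); simpl; auto. constructor; [|constructor]; auto.
  - intros [H|H]; [apply N1; simpl; auto|]. apply N1; simpl; right.
    apply In_eps in H as [p [Hp Hx]]. apply In_eps. exists p. apply filter_In in Hp. tauto.
  - intros H. apply N2. apply In_eps in H as [p [Hp Hx]]. apply In_eps. exists p. apply filter_In in Hp. tauto.
Qed.

Lemma sim_refl m : sim m m.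
Proof. exists (fun i => i), (fun i => i). repeat split; auto. exists []; auto. intros i H; congruence. Qed.

Lemma sim_sym a b : sim a b -> sim b a.
Proof.
  intros [s [t [Hst [[l Hl] [Hv Hb]]]]]. exists t, s. repeat split; try apply Hst.
  - exists l. intros i Hi. rewrite <- (Hl i Hi) at 1. apply Hst.
  - intros i Hi. rewrite Hb. assert (s i <> i). { intro E. apply Hi. rewrite <- E at 1. apply Hst. }
    apply Hv. intro E. apply H. assert (E2 : t (s (s i)) = t (s i)) by (rewrite E; auto).
    rewrite !(proj2 (Hst _)) in E2. auto.
  - intros i. rewrite Hb. f_equal. symmetry; apply Hst.
Qed.

Lemma sim_vw a b x : sim a b -> (is_vw (a x) <-> is_vw (b x)).
Proof.
  intros [s [t [Hst [[l Hl] [Hv Hb]]]]]. rewrite Hb.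
  destruct (Z.eq_dec (s x) x) as [E|E]; [rewrite E; tauto|].
  split; intros _; [|apply Hv; auto].
  apply Hv. intro E2. apply E. assert (E3 : t (s (s x)) = t (s x)) by (rewrite E2; auto).
  rewrite !(proj2 (Hst _)) in E3. auto.
Qed.

Lemma sim_fix a b x : sim a b -> ~ is_vw (a x) -> b x = a x.
Proof.
  intros [s [t [Hst [[l Hl] [Hv Hb]]]]] H. rewrite Hb.
  destruct (Z.eq_dec (s x) x) as [E|E]; [rewrite E; auto|]. exfalso; apply H, Hv; auto.
Qed.

Lemma sim_swap_left a b r s : sim a b -> is_vw (a r) -> is_vw (a s) -> sim (swapf r s a) b.
Proof.
  intros [sg [t [Hst [[l Hl] [Hv Hb]]]]] Hr Hs.
  set (tau := fun k => if Z.eq_dec k r then s else if Z.eq_dec k s then r else k).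
  assert (Htt : forall k, tau (tau k) = k).
  { intro k; unfold tau; repeat destruct Z.eq_dec; congruence. }
  assert (Hsw : forall k, swapf r s a k = a (tau k)).
  { intro k; unfold swapf, tau; repeat destruct Z.eq_dec; congruence. }
  exists (fun i => tau (sg i)), (fun i => t (tau i)). repeat split.
  - rewrite (proj1 (Hst _)). apply Htt.
  - rewrite Htt. apply Hst.
  - exists (r :: s :: l). intros i Hi. simpl in Hi. rewrite Hl by tauto.
    unfold tau; repeat destruct Z.eq_dec; subst; tauto || reflexivity.
  - intros i Hi. rewrite Hsw.
    destruct (Z.eq_dec (sg i) i) as [E|E].
    + rewrite E in Hi. unfold tau in *. repeat destruct Z.eq_dec; subst; try congruence; auto.
    + assert (is_vw (a i)) by (apply Hv; auto).
      unfold tau. repeat destruct Z.eq_dec; subst; auto.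
  - intros i. rewrite Hb, Hsw, Htt. auto.
Qed.

Lemma sim_swap_right a b r s : sim a b -> is_vw (b r) -> is_vw (b s) -> sim a (swapf r s b).
Proof. intros H Hr Hs. apply sim_sym. apply sim_swap_left; auto. apply sim_sym; auto. Qed.

Lemma sim_cnt a b : sim a b -> exists l, forall W, NoDup W -> incl l W ->
  forall (P : lab -> Prop), cnt (fun x => P (a x)) W = cnt (fun x => P (b x)) W.
Proof.
  intros [sg [t [Hst [[l Hl] [Hv Hb]]]]]. exists l. intros W ND Hinc P.
  assert (Hperm : Permutation (map sg W) W).
  { apply NoDup_Permutation_bis.
    - apply FinFun.Injective_map_NoDup; auto. intros x y E.
      rewrite <- (proj2 (Hst x)), <- (proj2 (Hst y)), E; auto.
    - rewrite length_map; lia.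
    - intros y Hy. apply in_map_iff in Hy as [x [<- Hx]].
      destruct (Z.eq_dec (sg x) x) as [E|E]; [rewrite E; auto|].
      apply Hinc. destruct (in_dec Z.eq_dec (sg x) l) as [Hi|Hi]; auto.
      exfalso. apply Hl in Hi. apply E. assert (E3 : t (sg (sg x)) = t (sg x)) by (rewrite Hi; auto).
      rewrite !(proj2 (Hst _)) in E3. auto. }
  rewrite <- (cnt_perm _ _ _ Hperm), cnt_map. apply cnt_ext. intros x _. rewrite Hb. tauto.
Qed.


Lemma ul_cup I m c p : is_underline I m c -> In p (cups c) -> m (fst p) = Vee /\ m (snd p) = Wedge.
Proof.
  intros [Hc [[_ [Ho _]] Hd]] Hp. unfold degree in Hd.
  destruct (filter (fun p => is_wedgeb (m (fst p))) (cups c)) eqn:E; [|simpl in Hd; lia].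
  assert (Hf : is_wedgeb (m (fst p)) = false).
  { destruct (is_wedgeb (m (fst p))) eqn:E2; auto.
    assert (In p (filter (fun p => is_wedgeb (m (fst p))) (cups c))) by (apply filter_In; auto).
    rewrite E in H; destruct H. }
  destruct (Ho p Hp) as [H|[H1 H2]]; auto. rewrite H1 in Hf; discriminate.
Qed.

Lemma classify c m x : oriented c m -> is_vw (m x) ->
  (exists q, In q (cups c) /\ (x = fst q \/ x = snd q)) \/ ray c x.
Proof.
  intros [Hf _] Hv. destruct (classic (In x (endpoints c))) as [H|H].
  - left. apply In_ep; auto.
  - destruct (classic (ray c x)) as [H2|H2]; auto.
    destruct (Hf x H H2) as [E|E]; rewrite E in Hv; destruct Hv; discriminate.
Qed.

Lemma ul_unique_aux I m : forall n c c', is_underline I m c -> is_underline I m c' ->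
  forall p, In p (cups c) -> (Z.to_nat (snd p - fst p) <= n)%nat -> In p (cups c').
Proof.
  induction n as [|n IH]; intros c c' U U' [a b] Hp Hn; simpl in Hn.
  { destruct U as [[Hc1 _] _]. destruct (Hc1 _ Hp) as [Hab _]; simpl in Hab. lia. }
  assert (Ucp := U). assert (Ucp' := U').
  destruct U as [[Hc1 [Hnd [Hx Hr]]] [Ho Hd]].
  destruct U' as [[Hc1' [Hnd' [Hx' Hr']]] [Ho' Hd']].
  destruct (ul_cup _ _ _ _ Ucp Hp) as [Ha Hb]; simpl in Ha, Hb.
  destruct (Hc1 _ Hp) as [Hab _]; simpl in Hab.
  assert (Va : is_vw (m a)) by (left; auto).
  assert (Vb : is_vw (m b)) by (right; auto).
  destruct (classify _ _ _ Ho' Va) as [[q [Hq Ea]]|Ra].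
  - destruct (ul_cup _ _ _ _ Ucp' Hq) as [Hqa Hqb].
    destruct Ea as [Ea|Ea]; [|rewrite <- Ea in Hqb; congruence].
    destruct q as [a' b']; simpl in *; subst a'.
    destruct (Z.lt_total b' b) as [Lt|[Eq|Gt]].
    + exfalso. assert (In (a, b') (cups c)).
      { apply (IH c' c Ucp' Ucp); auto. simpl. lia. }
      assert (HH : (a, b) = (a, b')) by (apply (cup_eq (cups c)); auto). injection HH; lia.
    + subst; auto.
    + exfalso. destruct (classify _ _ _ Ho' Vb) as [[q2 [Hq2 Eb]]|Rb].
      * destruct (ul_cup _ _ _ _ Ucp' Hq2) as [Hq21 Hq22].
        destruct Eb as [Eb|Eb]; [rewrite <- Eb in Hq21; congruence|].
        destruct q2 as [a2 b2]; simpl in *; subst b2.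
        destruct (Hc1' _ Hq2) as [Hab2 _]; simpl in Hab2.
        destruct (Z.lt_total a2 a) as [L2|[E2|G2]].
        -- apply (Hx' _ _ Hq2 Hq); simpl; lia.
        -- subst. assert (HH : (a, b) = (a, b')) by (apply (cup_eq (cups c')); auto). injection HH; lia.
        -- assert (In (a2, b) (cups c)).
           { apply (IH c' c Ucp' Ucp); auto. simpl. lia. }
           assert (HH : (a, b) = (a2, b)) by (apply (cup_eq (cups c)); simpl; auto). injection HH; lia.
      * destruct (Hr' _ Rb) as [_ [_ Hu]]. apply (Hu _ Hq); simpl; lia.
  - exfalso. destruct (Hr' _ Ra) as [_ [Hne Hu]].
    destruct (classify _ _ _ Ho' Vb) as [[q2 [Hq2 Eb]]|Rb].
    + destruct (ul_cup _ _ _ _ Ucp' Hq2) as [Hq21 Hq22].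
      destruct Eb as [Eb|Eb]; [rewrite <- Eb in Hq21; congruence|].
      destruct q2 as [a2 b2]; simpl in *; subst b2.
      destruct (Hc1' _ Hq2) as [Hab2 _]; simpl in Hab2.
      destruct (Z.lt_total a2 a) as [L2|[E2|G2]].
      * apply (Hu _ Hq2); simpl; lia.
      * subst. apply Hne. apply In_ep. exists (a, b); simpl; auto.
      * assert (In (a2, b) (cups c)).
        { apply (IH c' c Ucp' Ucp); auto. simpl. lia. }
        assert (HH : (a, b) = (a2, b)) by (apply (cup_eq (cups c)); simpl; auto). injection HH; lia.
    + destruct Ho' as [_ [_ [_ Hro]]]. apply (Hro a b); auto.
Qed.

Lemma ul_unique I m c c' : is_underline I m c -> is_underline I m c' ->
  forall p, In p (cups c) -> In p (cups c').
Proof. intros U U' p Hp. apply (ul_unique_aux I m _ c c' U U' p Hp (le_n _)). Qed.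

Lemma NoDup_cups cs : NoDup (eps cs) -> NoDup cs.
Proof.
  induction cs as [|a cs IH]; simpl; intros ND; constructor.
  - intro H. inversion ND; subst. apply H2. right. apply In_eps. exists a; auto.
  - apply IH. inversion ND; subst. inversion H2; subst. auto.
Qed.

Lemma ul_length I m c c' : is_underline I m c -> is_underline I m c' -> length (cups c) = length (cups c').
Proof.
  intros U U'. assert (N1 : NoDup (cups c)) by (apply NoDup_cups; destruct U as [[_ [X _]] _]; exact X).
  assert (N2 : NoDup (cups c')) by (apply NoDup_cups; destruct U' as [[_ [X _]] _]; exact X).
  apply Nat.le_antisymm; apply NoDup_incl_length; auto; intros p Hp.
  apply (ul_unique I m c c' U U'); auto. apply (ul_unique I m c' c U' U); auto.
Qed.

Lemma ul_degree I m c c' g : is_underline I m c -> is_underline I m c' -> degree c g = degree c' g.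
Proof.
  intros U U'. assert (N1 : NoDup (cups c)) by (apply NoDup_cups; destruct U as [[_ [X _]] _]; exact X).
  assert (N2 : NoDup (cups c')) by (apply NoDup_cups; destruct U' as [[_ [X _]] _]; exact X).
  unfold degree. apply Nat.le_antisymm; apply NoDup_incl_length; try apply NoDup_filter; auto;
  intros p Hp; apply filter_In in Hp; apply filter_In; split; try tauto.
  apply (ul_unique I m c c' U U'); tauto. apply (ul_unique I m c' c U' U); tauto.
Qed.

Lemma defect_eq I m c : is_underline I m c -> defect I m = length (cups c).
Proof.
  intros U. unfold defect.
  assert (H := epsilon_spec (inhabits 0%nat) (fun n => exists c, is_underline I m c /\ length (cups c) = n)
    (ex_intro _ _ (ex_intro _ c (conj U eq_refl)))).
  simpl in H. destruct H as [c' [U' E]]. rewrite <- E. eapply ul_length; eauto.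
Qed.

Lemma cnt_V_eps m cs : (forall p, In p cs -> (m (fst p) = Vee /\ m (snd p) = Wedge) \/ (m (fst p) = Wedge /\ m (snd p) = Vee)) ->
  cnt (fun x => m x = Vee) (eps cs) = length cs.
Proof.
  induction cs as [|p cs IH]; intros H; [reflexivity|]. simpl. rewrite !cnt_cons, IH by (intros; apply H; simpl; auto).
  destruct (H p (or_introl eq_refl)) as [[E1 E2]|[E1 E2]]; rewrite E1, E2.
  - rewrite (decT' (Vee = Vee)) by auto. rewrite (decF' (Wedge = Vee)) by discriminate. lia.
  - rewrite (decT' (Vee = Vee)) by auto. rewrite (decF' (Wedge = Vee)) by discriminate. lia.
Qed.

Lemma cnt_E_part I c m W : is_cupdiag I c -> oriented c m -> NoDup W -> incl (endpoints c) W ->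
  cnt (fun x => m x = Vee /\ In x (endpoints c)) W = length (cups c).
Proof.
  intros Hc Ho ND Hinc. rewrite cnt_filter.
  rewrite (cnt_perm _ _ (endpoints c)).
  - apply cnt_V_eps. intros p Hp. apply Ho; auto.
  - apply NoDup_Permutation. apply NoDup_filter; auto. apply Hc.
    intros x; rewrite filter_In. split; [intros [_ H]; apply decT in H; auto|].
    intros H; split; auto. apply decT'; auto.
Qed.

Lemma ray_core I c m1 m2 k W : is_cupdiag I c -> oriented c m1 -> oriented c m2 -> ray c k ->
  m1 k = Wedge -> m2 k = Vee -> NoDup W -> incl (endpoints c) W -> In k W ->
  cnt (fun x => m1 x = Vee) W = cnt (fun x => m2 x = Vee) W -> False.
Proof.
  intros Hc Ho1 Ho2 Rk E1 E2 ND Hinc Hk Heq.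
  rewrite (cnt_split _ (fun x => In x (endpoints c))) in Heq.
  rewrite (cnt_split (fun x => m2 x = Vee) (fun x => In x (endpoints c))) in Heq.
  rewrite !(cnt_E_part I) in Heq; auto.
  assert (cnt (fun x => m1 x = Vee /\ ~ In x (endpoints c)) W < cnt (fun x => m2 x = Vee /\ ~ In x (endpoints c)) W)%nat; [|lia].
  apply cnt_lt.
  - intros x Hx [Vx Ex]. split; auto.
    assert (Rx : ray c x).
    { destruct (classify _ _ _ Ho1 (or_introl Vx)) as [[q [Hq Eq]]|R]; auto.
      exfalso; apply Ex; apply In_ep; eauto. }
    destruct (Z.lt_total x k) as [L|[Eq|G]].
    + exfalso. destruct Ho1 as [_ [_ [_ Hro]]]. apply (Hro x k); auto.
    + subst; congruence.
    + destruct Ho2 as [_ [_ [Hrv Hro]]]. destruct (Hrv x Rx) as [H|H]; auto.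
      exfalso. apply (Hro k x); auto.
  - exists k. split; auto. split; [split; auto; apply Hc; auto|]. intros [H _]; congruence.
Qed.

Lemma ray_eq I c m1 m2 : is_cupdiag I c -> oriented c m1 -> oriented c m2 -> sim m1 m2 ->
  forall k, ray c k -> m1 k = m2 k.
Proof.
  intros Hc Ho1 Ho2 S k Rk. destruct (sim_cnt _ _ S) as [l Hl].
  set (W := nodup Z.eq_dec (l ++ endpoints c ++ [k])).
  assert (ND : NoDup W) by apply NoDup_nodup.
  assert (Hin : forall x, In x (l ++ endpoints c ++ [k]) -> In x W) by (intros; apply nodup_In; auto).
  assert (Heq := Hl W ND (fun x Hx => Hin x (in_or_app _ _ _ (or_introl Hx))) (fun v => v = Vee)). simpl in Heq.
  assert (Hinc : incl (endpoints c) W) by (intros x Hx; apply Hin; apply in_or_app; right; apply in_or_app; auto).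
  assert (Hk : In k W) by (apply Hin; apply in_or_app; right; apply in_or_app; right; simpl; auto).
  destruct Ho1 as [a1 [b1 [Hv1 d1]]] eqn:O1. destruct Ho2 as [a2 [b2 [Hv2 d2]]] eqn:O2.
  destruct (Hv1 k Rk) as [V1|W1]; destruct (Hv2 k Rk) as [V2|W2]; try congruence.
  - exfalso. apply (ray_core I c m2 m1 k W); auto.
  - exfalso. apply (ray_core I c m1 m2 k W); auto.
Qed.


Lemma min_pair (P Q : Z -> Prop) r s : r < s -> P r -> Q s ->
  exists r' s', r' < s' /\ P r' /\ Q s' /\ forall t, r' < t < s' -> ~ P t /\ ~ Q t.
Proof.
  assert (H : forall n r s, (Z.to_nat (s - r) <= n)%nat -> r < s -> P r -> Q s ->
    exists r' s', r' < s' /\ P r' /\ Q s' /\ forall t, r' < t < s' -> ~ P t /\ ~ Q t).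
  { induction n as [|n IH]; intros r0 s0 Hn Hrs Pr Qs; [lia|].
    destruct (classic (exists t, r0 < t < s0 /\ (P t \/ Q t))) as [[t [Ht [Pt|Qt]]]|N].
    - apply (IH t s0); auto; lia.
    - apply (IH r0 t); auto; lia.
    - exists r0, s0. repeat split; auto; intros Hc; apply N; exists t; tauto. }
  intros; eapply H; eauto.
Qed.

Lemma min_exists (P : Z -> Prop) lb x : P x -> (forall y, P y -> lb <= y) ->
  exists m, P m /\ forall y, P y -> m <= y.
Proof.
  intros Px Hlb.
  assert (H : forall n x, (Z.to_nat (x - lb) <= n)%nat -> P x -> exists m, P m /\ forall y, P y -> m <= y).
  { induction n as [|n IH]; intros x0 Hn P0.
    - exists x0. split; auto. intros y Py. assert (A := Hlb y Py). assert (B := Hlb x0 P0). lia.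
    - destruct (classic (exists y, P y /\ y < x0)) as [[y [Py Ly]]|N].
      + apply (IH y); auto. specialize (Hlb y Py). lia.
      + exists x0. split; auto. intros y Py. destruct (Z_lt_le_dec y x0); auto. exfalso; eauto. }
  eapply H; eauto.
Qed.

Lemma vw_in_I (I : Z -> Prop) (la : Z -> lab) k : (forall i, ~ I i -> la i = Circ) -> is_vw (la k) -> I k.
Proof. intros H V. destruct (classic (I k)) as [?|N]; auto. rewrite (H k N) in V. destruct V; discriminate. Qed.

Lemma exist_ul (I : Z -> Prop) : forall n la F, (forall i, ~ I i -> la i = Circ) ->
  (forall i j, i < j -> ~ In i F -> ~ In j F -> ~ (la i = Vee /\ la j = Wedge)) ->
  (cnt (fun x => is_vw (la x)) F <= n)%nat -> exists c, is_underline I la c.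
Proof.
  induction n as [|n IH]; intros la F HI HF Hn;
  (destruct (classic (exists i j, i < j /\ la i = Vee /\ la j = Wedge)) as [[i0 [j0 [Hij0 [Vi0 Wj0]]]]|N];
   [|exists (CupDiag [] (fun k => is_vw (la k)));
     refine (conj (conj _ (conj _ (conj _ _))) (conj (conj _ (conj _ (conj _ _))) _)); simpl;
     [intros p []|constructor|intros p q []|
      intros k Hk; repeat split; [eapply vw_in_I; eauto|intros []|intros p []]|
      intros k _ Hk; destruct (la k); auto; exfalso; apply Hk; [left|right]; auto|
      intros p []|auto|intros k l Hkl _ _ [A B]; apply N; eauto|reflexivity]]);
  destruct (min_pair (fun x => la x = Vee) (fun x => la x = Wedge) i0 j0 Hij0 Vi0 Wj0)
    as [i [j [Hij [Vi [Wj Hbtw]]]]];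
  assert (HFij : In i F \/ In j F) by (destruct (classic (In i F)); auto; destruct (classic (In j F)); auto;
                                         exfalso; apply (HF i j); auto);
  set (la' := fun k => if Z.eq_dec k i then Circ else if Z.eq_dec k j then Circ else la k);
  assert (Hlt : (cnt (fun x => is_vw (la' x)) F < cnt (fun x => is_vw (la x)) F)%nat) by
    (apply cnt_lt; [intros x _; unfold la'; destruct Z.eq_dec; [intros [H|H]; discriminate|];
                    destruct Z.eq_dec; [intros [H|H]; discriminate|]; auto|];
     destruct HFij as [H|H]; [exists i|exists j]; split; auto; unfold la';
     repeat destruct Z.eq_dec; try lia; (split; [red; auto|intros [X|X]; discriminate]));
  [lia|].
  assert (Hn' : (cnt (fun x => is_vw (la' x)) F <= n)%nat) by lia.
  assert (HI' : forall k, ~ I k -> la' k = Circ) by (intros k Hk; unfold la'; repeat destruct Z.eq_dec; auto).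
  assert (HF' : forall a b, a < b -> ~ In a F -> ~ In b F -> ~ (la' a = Vee /\ la' b = Wedge)).
  { intros a b Hab Ha Hb; unfold la'; repeat destruct Z.eq_dec; try (intros [X Y]; discriminate); apply HF; auto. }
  destruct (IH la' F HI' HF' Hn') as [c' [Hc' [Ho' Hd']]].
  assert (Lvw : forall k, is_vw (la' k) -> k <> i /\ k <> j /\ la' k = la k /\ ~ (i < k < j)).
  { intros k Hk. unfold la' in *. destruct (Z.eq_dec k i); [destruct Hk; discriminate|].
    destruct (Z.eq_dec k j); [destruct Hk; discriminate|]. repeat split; auto.
    intros Hb. destruct (Hbtw k Hb). destruct Hk; auto. }
  assert (Epvw : forall k, In k (endpoints c') -> is_vw (la' k)).
  { intros k Hk. apply In_ep in Hk as [p [Hp [E|E]]]; subst; destruct Ho' as [_ [Hoc _]];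
    destruct (Hoc p Hp) as [[A B]|[A B]]; red; rewrite ?A, ?B; auto. }
  assert (Rvw : forall k, ray c' k -> is_vw (la' k)) by (intros; apply Ho'; auto).
  assert (Iij : I i /\ I j) by (split; apply (vw_in_I I la); auto; red; auto).
  destruct Hc' as [Hc1 [Hnd [Hx Hr]]].
  assert (Cvw : forall p, In p (cups c') -> is_vw (la' (fst p)) /\ is_vw (la' (snd p))).
  { intros p Hp; split; apply Epvw; apply In_ep; exists p; auto. }
  exists (CupDiag ((i, j) :: cups c') (ray c')).
  refine (conj (conj _ (conj _ (conj _ _))) (conj (conj _ (conj _ (conj _ _))) _)); simpl.
  - intros p [<-|Hp]; simpl; auto.
  - change (NoDup (i :: j :: endpoints c')). constructor; [|constructor]; auto.
    + intros [E|E]; [lia|]. apply Epvw in E. apply Lvw in E; tauto.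
    + intros E. apply Epvw in E. apply Lvw in E; tauto.
  - intros p q [<-|Hp] [<-|Hq]; simpl; try lia.
    + destruct (Lvw _ (proj1 (Cvw q Hq))) as [A [B [_ C]]]. lia.
    + destruct (Lvw _ (proj2 (Cvw p Hp))) as [A [B [_ C]]]. lia.
    + apply Hx; auto.
  - intros k Rk. destruct (Hr k Rk) as [Ik [Nk Uk]]. destruct (Lvw k (Rvw k Rk)) as [A [B [_ C]]].
    repeat split; auto.
    + intros [E|[E|E]]; try lia. tauto.
    + intros p [<-|Hp]; simpl; auto.
  - intros k Hk Rk. assert (k <> i /\ k <> j /\ ~ In k (endpoints c')) as [A [B C]] by
      (simpl in Hk; repeat split; intro; apply Hk; auto).
    destruct Ho' as [Hfr _]. assert (E : la' k = la k) by (unfold la'; repeat destruct Z.eq_dec; congruence).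
    rewrite <- E. apply Hfr; auto.
  - intros p [<-|Hp]; simpl; auto. destruct Ho' as [_ [Hoc _]].
    destruct (Lvw _ (proj1 (Cvw p Hp))) as [_ [_ [E1 _]]]. destruct (Lvw _ (proj2 (Cvw p Hp))) as [_ [_ [E2 _]]].
    rewrite <- E1, <- E2. auto.
  - intros k Rk. destruct (Lvw k (Rvw k Rk)) as [_ [_ [E _]]]. rewrite <- E; auto.
  - intros k l Hkl Rk Rl. destruct (Lvw k (Rvw k Rk)) as [_ [_ [E _]]]. destruct (Lvw l (Rvw l Rl)) as [_ [_ [E' _]]].
    rewrite <- E, <- E'. destruct Ho' as [_ [_ [_ Hro]]]. apply Hro; auto.
  - unfold degree in *. simpl. rewrite Vi. simpl. rewrite <- Hd'. f_equal. apply filter_ext_in.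
    intros p Hp. destruct (Lvw _ (proj1 (Cvw p Hp))) as [_ [_ [E1 _]]]. rewrite E1; auto.
Qed.

Lemma ul_exists I la : is_weight I la -> exists c, is_underline I la c.
Proof. intros [HI [F HF]]. eapply (exist_ul I _ la F HI HF). apply le_n. Qed.


Fixpoint flips (la : Z -> lab) (ps : list (Z*Z)) : list (Z -> lab) :=
  match ps with [] => [la] | p :: ps => flips la ps ++ map (swapf (fst p) (snd p)) (flips la ps) end.

Definition Gc (la m : Z -> lab) ps := (forall k, ~ In k (eps ps) -> m k = la k) /\
  (forall p, In p ps -> (m (fst p) = Vee /\ m (snd p) = Wedge) \/ (m (fst p) = Wedge /\ m (snd p) = Vee)).


Lemma flips_char (la : Z -> lab) ps : NoDup (eps ps) -> (forall p, In p ps -> la (fst p) = Vee /\ la (snd p) = Wedge) ->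
  forall m, In m (flips la ps) <-> Gc la m ps.
Proof.
  induction ps as [|p ps IH]; intros ND Hl m.
  - simpl. split.
    + intros [<-|[]]. split; auto.
    + intros [H _]. left. apply functional_extensionality; intro k; symmetry; apply H; simpl; auto.
  - simpl in ND. inversion ND as [|? ? N1 ND1]; subst. inversion ND1 as [|? ? N2 ND2]; subst.
    assert (IH' := IH ND2 (fun q Hq => Hl q (or_intror Hq))).
    destruct (Hl p (or_introl eq_refl)) as [Va Wb].
    assert (Hab : fst p <> snd p) by (intro E; apply N1; left; auto).
    assert (NA : ~ In (fst p) (eps ps)) by (intro; apply N1; right; auto).
    assert (NB : ~ In (snd p) (eps ps)) by auto.
    assert (Hne : forall q, In q ps -> fst q <> fst p /\ fst q <> snd p /\ snd q <> fst p /\ snd q <> snd p).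
    { intros q Hq. assert (In (fst q) (eps ps) /\ In (snd q) (eps ps)) as [A B] by
        (split; apply In_eps; exists q; auto).
      repeat split; intro E; rewrite E in *; [apply N1; right|apply N2|apply N1; right|apply N2]; auto. }
    simpl. rewrite in_app_iff, in_map_iff. split.
    + intros [Hm|[m0 [<- Hm0]]].
      * apply IH' in Hm as [G1 G2]. split.
        -- intros k Hk. apply G1. intro; apply Hk; simpl; auto.
        -- intros q [<-|Hq]; auto. left. rewrite !G1; auto.
      * apply IH' in Hm0 as [G1 G2]. split.
        -- intros k Hk. simpl in Hk. rewrite swapf_o by (intro; apply Hk; auto). apply G1. intro; apply Hk; auto.
        -- intros q [<-|Hq].
           ++ right. rewrite swapf_a, swapf_b, !G1; auto.
           ++ destruct (Hne q Hq) as [A [B [C D]]]. rewrite !swapf_o; auto.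
    + intros [G1 G2]. destruct (G2 p (or_introl eq_refl)) as [[A B]|[A B]].
      * left. apply IH'. split; [|intros q Hq; apply G2; right; auto].
        intros k Hk. destruct (Z.eq_dec k (fst p)) as [->|E1]; [congruence|].
        destruct (Z.eq_dec k (snd p)) as [->|E2]; [congruence|]. apply G1. simpl. intuition.
      * right. exists (swapf (fst p) (snd p) m). split; [apply swapf_inv|]. apply IH'. split.
        -- intros k Hk. destruct (Z.eq_dec k (fst p)) as [->|E1]; [rewrite swapf_a; congruence|].
           destruct (Z.eq_dec k (snd p)) as [->|E2]; [rewrite swapf_b; congruence|].
           rewrite swapf_o by auto. apply G1. simpl. intuition.
        -- intros q Hq. destruct (Hne q Hq) as [A1 [B1 [C1 D1]]]. rewrite !swapf_o; auto. apply G2; right; auto.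
Qed.

Lemma flips_len (la : Z -> lab) ps : length (flips la ps) = (2 ^ length ps)%nat.
Proof. induction ps; simpl; auto. rewrite length_app, length_map, IHps. lia. Qed.

Lemma flips_nodup (la : Z -> lab) ps : NoDup (eps ps) -> (forall p, In p ps -> la (fst p) = Vee /\ la (snd p) = Wedge) ->
  NoDup (flips la ps).
Proof.
  induction ps as [|p ps IH]; intros ND Hl; simpl; [constructor; auto; constructor|].
  simpl in ND. inversion ND as [|? ? N1 ND1]; subst. inversion ND1 as [|? ? N2 ND2]; subst.
  assert (IH' := IH ND2 (fun q Hq => Hl q (or_intror Hq))).
  assert (Ch := flips_char la ps ND2 (fun q Hq => Hl q (or_intror Hq))).
  destruct (Hl p (or_introl eq_refl)) as [Va Wb].
  apply NoDup_app; auto.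
  - apply FinFun.Injective_map_NoDup; auto. intros x y E.
    rewrite <- (swapf_inv (fst p) (snd p) x), <- (swapf_inv (fst p) (snd p) y), E; auto.
  - intros m Hm Hm2. apply in_map_iff in Hm2 as [m0 [<- Hm0]].
    apply Ch in Hm as [G1 _]. apply Ch in Hm0 as [G1' _].
    assert (A := G1 (fst p) (fun H => N1 (or_intror H))).
    rewrite swapf_a, G1' in A by auto. congruence.
Qed.

Lemma flips_sim (la : Z -> lab) ps : NoDup (eps ps) -> (forall p, In p ps -> la (fst p) = Vee /\ la (snd p) = Wedge) ->
  forall m, In m (flips la ps) -> sim la m.
Proof.
  induction ps as [|p ps IH]; intros ND Hl m Hm; simpl in Hm.
  - destruct Hm as [<-|[]]. apply sim_refl.
  - simpl in ND. inversion ND as [|? ? N1 ND1]; subst. inversion ND1 as [|? ? N2 ND2]; subst.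
    assert (IH' := IH ND2 (fun q Hq => Hl q (or_intror Hq))).
    assert (Ch := flips_char la ps ND2 (fun q Hq => Hl q (or_intror Hq))).
    destruct (Hl p (or_introl eq_refl)) as [Va Wb].
    apply in_app_iff in Hm as [Hm|Hm]; auto. apply in_map_iff in Hm as [m0 [<- Hm0]].
    apply sim_swap_right; auto.
    + apply Ch in Hm0 as [G1 _]. rewrite G1; [left; auto|]. intro; apply N1; right; auto.
    + apply Ch in Hm0 as [G1 _]. rewrite G1; [right; auto|]. auto.
Qed.

Lemma weight_agree (I : Z -> Prop) la m X : is_weight I la -> (forall k, ~ In k X -> m k = la k) ->
  (forall k, ~ I k -> m k = Circ) -> is_weight I m.
Proof.
  intros [HI [F HF]] Hx Hm. split; auto. exists (F ++ X). intros i j Hij Hi Hj.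
  rewrite in_app_iff in Hi, Hj. rewrite !Hx by tauto. apply HF; tauto.
Qed.

Lemma part1 (I : Z -> Prop) la : is_weight I la ->
  has_card (fun mu => is_weight I mu /\ subw I la mu) (2 ^ defect I la)%nat.
Proof.
  intros Hw. destruct (ul_exists I la Hw) as [c0 U0].
  rewrite (defect_eq I la c0 U0).
  assert (ND : NoDup (eps (cups c0))) by (destruct U0 as [[_ [X _]] _]; exact X).
  assert (Hl : forall p, In p (cups c0) -> la (fst p) = Vee /\ la (snd p) = Wedge) by
    (intros; eapply ul_cup; eauto).
  exists (flips la (cups c0)). split; [apply flips_nodup; auto|]. split; [|apply flips_len].
  intros mu. rewrite (flips_char la _ ND Hl). split.
  - intros [Wm [S [c [U Ho]]]].
    assert (Hcc : forall p, In p (cups c) <-> In p (cups c0)) by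
      (intro p; split; [apply (ul_unique I la c c0 U U0)|apply (ul_unique I la c0 c U0 U)]).
    split.
    + intros k Hk. assert (Nk : ~ In k (endpoints c)).
      { intro H. apply Hk. apply In_ep in H as [p [Hp E]]. apply In_eps. exists p. rewrite <- Hcc. auto. }
      destruct (classic (ray c k)) as [R|R].
      * symmetry. apply (ray_eq I c la mu); auto; apply U.
      * destruct U as [_ [[Hfr _] _]]. apply (sim_fix la mu k S).
        destruct (Hfr k Nk R) as [E|E]; rewrite E; intros [X|X]; discriminate.
    + intros p Hp. apply Ho. apply Hcc; auto.
  - intros [G1 G2]. split.
    + apply (weight_agree I la mu (eps (cups c0)) Hw G1). intros k Hk.
      rewrite G1; [apply Hw; auto|]. intro H. apply In_eps in H as [p [Hp [E|E]]]; subst;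
      destruct U0 as [[Hc1 _] _]; destruct (Hc1 p Hp) as [_ [A B]]; auto.
    + split; [apply (flips_sim la (cups c0) ND Hl); apply flips_char; auto; split; auto|].
      exists c0. split; auto. destruct U0 as [[_ [_ [_ Hr]]] [[Hfr [Hoc [Hrv Hro]]] _]].
      refine (conj _ (conj _ (conj _ _))).
      * intros k Hk R. rewrite G1; auto.
      * auto.
      * intros k R. rewrite G1; [auto|apply Hr; auto].
      * intros k l Hkl Rk Rl. rewrite !G1 by (apply Hr; auto). auto.
Qed.


Definition bnd (V : Z -> Prop) y x K := forall L, NoDup L -> (forall z, In z L -> y < z < x /\ V z) -> (length L <= K)%nat.

Lemma NR_fin V : forall K y, exists L, forall x, V x -> y < x -> bnd V y x K -> In x L.
Proof.
  intros K. induction K as [|K IH]; intros y;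
  (destruct (classic (exists x, V x /\ y < x)) as [[x0 [V0 L0]]|N];
   [|exists []; intros x Vx Lx; exfalso; eauto]);
  destruct (min_exists (fun x => V x /\ y < x) y x0 (conj V0 L0)) as [z [[Vz Lz] Mz]];
   [intros ? [_ ?]; lia| |intros ? [_ ?]; lia|].
  - exists [z]. intros x Vx Lx B. destruct (Z.eq_dec x z) as [->|E]; [left; auto|exfalso].
    assert (z < x) by (specialize (Mz x (conj Vx Lx)); lia).
    specialize (B [z]). simpl in B. assert (1 <= 0)%nat; [|lia]. apply B.
    repeat constructor; auto. intros w [<-|[]]; auto.
  - destruct (IH z) as [L HL]. exists (z :: L). intros x Vx Lx B.
    destruct (Z.eq_dec x z) as [->|E]; [left; auto|right].
    assert (z < x) by (specialize (Mz x (conj Vx Lx)); lia).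
    apply HL; auto. intros L' ND HL'. specialize (B (z :: L')). simpl in B.
    assert (S (length L') <= S K)%nat; [|lia]. apply B.
    + constructor; auto. intro H'. apply HL' in H'. lia.
    + intros w [<-|Hw]; [split; auto; lia|]. apply HL' in Hw. split; [lia|tauto].
Qed.

Lemma NL_fin V : forall K y, exists L, forall x, V x -> x < y -> bnd V x y K -> In x L.
Proof.
  intros K y. destruct (NR_fin (fun z => V (- z)) K (- y)) as [L HL].
  exists (map Z.opp L). intros x Vx Lx B. apply in_map_iff. exists (- x). split; [lia|].
  apply HL; [rewrite Z.opp_involutive; auto|lia|].
  intros L' ND HL'. rewrite <- (length_map Z.opp). apply B.
  - apply FinFun.Injective_map_NoDup; auto. intros a b E; lia.
  - intros w Hw. apply in_map_iff in Hw as [w' [<- Hw']]. apply HL' in Hw'. split; [lia|tauto].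
Qed.

Lemma fin_union (P : Z -> Z -> Prop) : (forall y, exists L, forall x, P y x -> In x L) ->
  forall F, exists L, forall y x, In y F -> P y x -> In x L.
Proof.
  intros H F. induction F as [|y F IH]. exists []; intros y x [].
  destruct IH as [L HL]. destruct (H y) as [L' HL']. exists (L' ++ L).
  intros y' x [<-|Hy] Hp; apply in_or_app; eauto.
Qed.

Fixpoint fam (la : Z -> lab) (X : list Z) : list (Z -> lab) :=
  match X with [] => [la] | x :: X => flat_map (fun g => map (upd g x) [Circ;Cross;Vee;Wedge]) (fam la X) end.

Lemma fam_complete la X : forall m, (forall k, ~ In k X -> m k = la k) -> In m (fam la X).
Proof.
  induction X as [|x X IH]; intros m H; simpl.
  - left. apply functional_extensionality; intro k; symmetry; apply H; auto.
  - apply in_flat_map. exists (upd m x (la x)). split.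
    + apply IH. intros k Hk. unfold upd. destruct Z.eq_dec; subst; auto. apply H. simpl; intros [E|E]; [congruence|tauto].
    + assert (Em : forall v, m x = v -> upd (upd m x (la x)) x v = m).
      { intros v Hv; apply functional_extensionality; intro k; unfold upd. destruct Z.eq_dec; subst; auto. }
      simpl. destruct (m x) eqn:Ex; [left|right;left|right;right;left|right;right;right;left]; apply Em; auto.
Qed.

Lemma fin_sub (I : Z -> Prop) la : is_weight I la -> forall n, exists X, forall mu c,
  sim mu la -> is_underline I mu c -> oriented c la -> (length (cups c) <= n)%nat ->
  forall x, ~ In x X -> mu x = la x.
Proof.
  intros [HI [F HF]] n. set (V := fun z => is_vw (la z)). set (K := (2 * n)%nat).
  destruct (fin_union (fun y x => V x /\ y < x /\ bnd V y x K)
    (fun y => match NR_fin V K y with ex_intro _ L HL => ex_intro _ L (fun x H => HL x (proj1 H) (proj1 (proj2 H)) (proj2 (proj2 H))) end) F)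
    as [L1 HL1].
  destruct (fin_union (fun y x => V x /\ x < y /\ bnd V x y K)
    (fun y => match NL_fin V K y with ex_intro _ L HL => ex_intro _ L (fun x H => HL x (proj1 H) (proj1 (proj2 H)) (proj2 (proj2 H))) end) F)
    as [L2 HL2].
  assert (Hanch : exists L3, forall a b, ~ In a F -> ~ In b F -> la a = Wedge -> la b = Vee -> a < b ->
     bnd V a b K -> In a L3 /\ In b L3).
  { destruct (classic (exists a0 b0, ~ In a0 F /\ ~ In b0 F /\ la a0 = Wedge /\ la b0 = Vee)) as
      [[a0 [b0 [Fa0 [Fb0 [Wa0 Vb0]]]]]|N]; [|exists []; intros a b Fa Fb Wa Vb _ _; exfalso; apply N; exists a, b; auto].
    assert (Hgt : forall x, ~ In x F -> la x = Vee -> a0 < x).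
    { intros x Fx Vx. destruct (Z.lt_total x a0) as [L|[E|G]]; auto.
      - exfalso. apply (HF x a0); auto.
      - subst; congruence. }
    destruct (min_exists (fun x => ~ In x F /\ la x = Vee) a0 b0 (conj Fb0 Vb0)) as [m [[Fm Vm] Mm]].
    { intros y [A B]; specialize (Hgt y A B); lia. }
    destruct (NR_fin V K m) as [LR HLR]. destruct (NL_fin V K m) as [LL HLL].
    exists (m :: LR ++ LL). intros a b Fa Fb Wa Vb Lab B.
    assert (Mb : m <= b) by (apply Mm; auto).
    assert (Am : a < m).
    { destruct (Z.lt_total a m) as [L|[E|G]]; auto. subst; congruence. exfalso; apply (HF m a); auto. }
    split.
    - right. apply in_or_app. right. apply HLL; auto. unfold V; red; right; auto.
      intros L ND HL. apply B; auto. intros z Hz. destruct (HL z Hz) as [Z1 Z2]. split; [lia|auto].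
    - destruct (Z.eq_dec b m) as [->|E]; [left; auto|right]. apply in_or_app; left.
      apply HLR; [unfold V; red; left; auto|lia|].
      intros L ND HL. apply B; auto. intros z Hz. destruct (HL z Hz) as [Z1 Z2]. split; [lia|auto]. }
  destruct Hanch as [L3 HL3].
  exists (F ++ L1 ++ L2 ++ L3). intros mu c S U Ho Hn x Hx.
  rewrite !in_app_iff in Hx.
  assert (Hcd := proj1 U).
  destruct (classic (In x (endpoints c))) as [E|E].
  - apply In_ep in E as [[a b] [Hp Ex]]. simpl in Ex.
    destruct (ul_cup _ _ _ _ U Hp) as [Va Wb]; simpl in Va, Wb.
    assert (Hoc := proj1 (proj2 Ho)). destruct (Hoc _ Hp) as [[A B]|[A B]]; simpl in A, B.
    { destruct Ex; subst; congruence. }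
    exfalso. destruct Hcd as [Hc1 [Hnd [_ Hr]]]. destruct (Hc1 _ Hp) as [Lab _]; simpl in Lab.
    assert (B0 : bnd V a b K).
    { intros L ND HL. apply (Nat.le_trans _ (length (endpoints c))).
      - apply NoDup_incl_length; auto. intros z Hz. apply HL in Hz as [Bz Vz].
        destruct (classify _ _ _ Ho Vz) as [[q [Hq Eq]]|Rz]; [apply In_ep; eauto|].
        exfalso. destruct (Hr z Rz) as [_ [_ Hu]]. apply (Hu _ Hp); simpl; lia.
      - rewrite eps_ep, eps_length. unfold K; lia. }
    destruct (classic (In a F)) as [Fa|Fa].
    + assert (In b L1) by (apply (HL1 a b Fa); repeat split; auto; unfold V; red; left; auto).
      destruct Ex; subst; tauto.
    + destruct (classic (In b F)) as [Fb|Fb].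
      * assert (In a L2) by (apply (HL2 b a Fb); repeat split; auto; unfold V; red; right; auto).
        destruct Ex; subst; tauto.
      * destruct (HL3 a b Fa Fb A B Lab B0). destruct Ex; subst; tauto.
  - destruct (classic (ray c x)) as [R|R].
    + apply (ray_eq I c mu la); auto. apply U.
    + destruct U as [_ [[Hfr _] _]]. symmetry. apply (sim_fix mu la x S).
      destruct (Hfr x E R) as [A|A]; rewrite A; intros [B|B]; discriminate.
Qed.

Lemma NoDup_map_choice (g : Z * Z -> Z) cs : NoDup (eps cs) -> (forall p, In p cs -> g p = fst p \/ g p = snd p) ->
  NoDup (map g cs).
Proof.
  induction cs as [|p cs IH]; intros ND H; simpl; [constructor|].
  simpl in ND. inversion ND as [|? ? N1 ND1]; subst. inversion ND1 as [|? ? N2 ND2]; subst.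
  constructor; [|apply IH; auto; intros; apply H; simpl; auto].
  intro Hin. apply in_map_iff in Hin as [q [Eq Hq]].
  assert (In (g q) (eps cs)) by (apply In_eps; exists q; split; auto; apply H; simpl; auto).
  rewrite Eq in H0. destruct (H p (or_introl eq_refl)) as [E|E]; rewrite E in H0; [apply N1; right|apply N2]; auto.
Qed.

Lemma cups_bound (I : Z -> Prop) la F mu c : (forall i j, i < j -> ~ In i F -> ~ In j F -> ~ (la i = Vee /\ la j = Wedge)) ->
  is_underline I mu c -> oriented c la -> (length (cups c) <= length F + degree c la)%nat.
Proof.
  intros HF U Ho. destruct U as [[Hc1 [Hnd _]] _].
  set (cw := fun p : Z * Z => is_wedgeb (la (fst p))).
  rewrite <- (filter_length cw (cups c)). unfold degree. fold cw.
  enough (length (filter (fun x => negb (cw x)) (cups c)) <= length F)%nat by lia.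
  set (g := fun p : Z * Z => if in_dec Z.eq_dec (fst p) F then fst p else snd p).
  rewrite <- (length_map g). apply NoDup_incl_length.
  - apply NoDup_map_choice. apply NoDup_eps_filter; auto.
    intros p _. unfold g; destruct in_dec; auto.
  - intros y Hy. apply in_map_iff in Hy as [p [<- Hp]]. apply filter_In in Hp as [Hp Hn].
    unfold cw in Hn. destruct Ho as [_ [Hoc _]]. destruct (Hoc p Hp) as [[A B]|[A B]]; [|rewrite A in Hn; discriminate].
    destruct (Hc1 p Hp) as [Lt _]. unfold g. destruct in_dec; auto.
    destruct (classic (In (snd p) F)); auto. exfalso. apply (HF (fst p) (snd p)); auto.
Qed.

Lemma part3 (I : Z -> Prop) la : is_weight I la -> forall j, finite_set (fun mu => is_weight I mu /\ sim mu la /\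
       exists c, is_underline I mu c /\ oriented c la /\ Z.of_nat (degree c la) = j).
Proof.
  intros Hw j. assert (Hw' := Hw). destruct Hw' as [HI [F HF]].
  destruct (fin_sub I la Hw (length F + Z.to_nat j)) as [X HX].
  exists (fam la X). intros mu [Wm [S [c [U [Ho Hd]]]]]. apply fam_complete.
  apply (HX mu c S U Ho). assert (A := cups_bound I la F mu c HF U Ho). lia.
Qed.

Lemma part2b (I : Z -> Prop) la : is_weight I la -> block_defect_finite I la ->
  finite_set (fun mu => is_weight I mu /\ subw I mu la).
Proof.
  intros Hw [N HN]. destruct (fin_sub I la Hw N) as [X HX].
  exists (fam la X). intros mu [Wm [S [c [U Ho]]]]. apply fam_complete.
  apply (HX mu c S U Ho). rewrite <- (defect_eq I mu c U). apply HN; auto. apply sim_sym; auto.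
Qed.


Definition addc (c : cupdiag) r s := CupDiag ((r,s) :: cups c) (fun x => ray c x /\ x <> r /\ x <> s).

Lemma add_cup_cd (I : Z -> Prop) c r s : is_cupdiag I c -> ray c r -> ray c s -> r < s -> (forall t, r < t < s -> ~ ray c t) ->
  is_cupdiag I (addc c r s).
Proof.
  intros [Hc1 [Hnd [Hx Hr]]] Rr Rs Lrs Hb.
  destruct (Hr r Rr) as [Ir [Nr Ur]]. destruct (Hr s Rs) as [Is [Ns Us]].
  refine (conj _ (conj _ (conj _ _))); simpl.
  - intros p [<-|Hp]; simpl; auto.
  - change (NoDup (r :: s :: endpoints c)). constructor; [|constructor]; auto.
    intros [E|E]; [lia|auto].
  - intros p q [<-|Hp] [<-|Hq]; simpl; try lia.
    + intros [A B]. apply (Us q Hq). lia.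
    + intros [A B]. apply (Ur p Hp). lia.
    + apply Hx; auto.
  - intros k [Rk [Ekr Eks]]. destruct (Hr k Rk) as [Ik [Nk Uk]]. repeat split; auto.
    + change (~ In k (r :: s :: endpoints c)). intros [E|[E|E]]; auto.
    + intros p [<-|Hp]; simpl; auto. intros A. apply (Hb k A Rk).
Qed.

Lemma add_cup_or (I : Z -> Prop) c r s g g' : is_cupdiag I c -> oriented c g -> ray c r -> ray c s ->
  (forall x, x <> r -> x <> s -> g' x = g x) ->
  ((g' r = Vee /\ g' s = Wedge) \/ (g' r = Wedge /\ g' s = Vee)) ->
  oriented (addc c r s) g'.
Proof.
  intros [Hc1 [Hnd [Hx Hr]]] [Hfr [Hoc [Hrv Hro]]] Rr Rs Hg Hrs.
  destruct (Hr r Rr) as [Ir [Nr Ur]]. destruct (Hr s Rs) as [Is [Ns Us]].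
  assert (Ne : forall p, In p (cups c) -> fst p <> r /\ fst p <> s /\ snd p <> r /\ snd p <> s).
  { intros p Hp. assert (In (fst p) (endpoints c) /\ In (snd p) (endpoints c)) as [A B] by
      (split; apply In_ep; exists p; auto).
    repeat split; intro E; rewrite E in *; auto. }
  refine (conj _ (conj _ (conj _ _))); simpl.
  - intros k Hk Rk. change (~ In k (r :: s :: endpoints c)) in Hk.
    assert (k <> r /\ k <> s /\ ~ In k (endpoints c)) as [A [B C]] by (repeat split; intro; apply Hk; simpl; auto).
    rewrite Hg by auto. apply Hfr; auto.
  - intros p [<-|Hp]; simpl; auto. destruct (Ne p Hp) as [A [B [C D]]]. rewrite !Hg by auto. auto.
  - intros k [Rk [A B]]. rewrite Hg by auto. auto.
  - intros k l Hkl [Rk [A B]] [Rl [C D]]. rewrite !Hg by auto. auto.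
Qed.

Lemma ray_bound (I : Z -> Prop) la c0 v (pr : Z*Z -> Z) k : is_weight I la -> is_underline I la c0 ->
  (forall p, pr p = fst p \/ pr p = snd p) -> is_vw v ->
  (forall m c p, is_underline I m c -> In p (cups c) -> m (pr p) = v /\ forall x, (x = fst p \/ x = snd p) -> m x = v -> x = pr p) ->
  (forall L, NoDup L -> (forall x, In x L -> ray c0 x /\ la x = v) -> (length L < k)%nat) ->
  block_defect_finite I la.
Proof.
  intros Hw U0 Hpr Hvv Hv Hk. exists (length (cups c0) + k)%nat. intros mu Wm S.
  destruct (ul_exists I mu Wm) as [c U]. rewrite (defect_eq I mu c U).
  destruct (sim_cnt _ _ S) as [l Hl].
  set (W := nodup Z.eq_dec (l ++ endpoints c ++ endpoints c0)).
  assert (ND : NoDup W) by apply NoDup_nodup.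
  assert (Hin : forall x, In x (l ++ endpoints c ++ endpoints c0) -> In x W) by (intros; apply nodup_In; auto).
  assert (Heq := Hl W ND (fun x Hx => Hin x (in_or_app _ _ _ (or_introl Hx))) (fun w => w = v)). simpl in Heq.
  assert (A1 : (length (cups c) <= cnt (fun x => mu x = v) W)%nat).
  { rewrite <- (length_map pr). apply nodup_le_cnt.
    - apply NoDup_map_choice; [destruct U as [[_ [X _]] _]; exact X|auto].
    - intros x Hx. apply in_map_iff in Hx as [p [<- Hp]]. split; [|apply (Hv mu c p U Hp)].
      apply Hin. apply in_or_app; right; apply in_or_app; left. apply In_ep. exists p. split; auto. }
  rewrite (cnt_split _ (fun x => In x (endpoints c0))) in Heq.
  assert (A2 : (cnt (fun x => la x = v /\ In x (endpoints c0)) W <= length (cups c0))%nat).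
  { rewrite <- (length_map pr). apply cnt_le_incl; auto. intros x _ [Vx Ex].
    apply In_ep in Ex as [p [Hp Ep]]. apply in_map_iff. exists p. split; auto.
    symmetry. apply (proj2 (Hv la c0 p U0 Hp)); auto. }
  assert (A3 : (cnt (fun x => la x = v /\ ~ In x (endpoints c0)) W < k)%nat).
  { apply Hk. apply NoDup_filter; auto. intros x Hx. apply filter_In in Hx as [_ Hx]. apply decT in Hx as [Vx Ex].
    split; auto. assert (Vw : is_vw (la x)) by (rewrite Vx; auto).
    destruct (classify c0 la x (proj1 (proj2 U0)) Vw) as [[q [Hq Eq]]|R]; auto.
    exfalso; apply Ex; apply In_ep; eauto. }
  lia.
Qed.


Lemma pigeon (A B : list Z) : NoDup A -> (length B < length A)%nat -> exists a, In a A /\ ~ In a B.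
Proof.
  intros ND L. apply NNPP; intro N. assert (incl A B).
  { intros x Hx. apply NNPP; intro Nx. apply N; eauto. }
  assert (H' := NoDup_incl_length ND H). lia.
Qed.

Lemma many_rays (I : Z -> Prop) la c0 v pr : is_weight I la -> is_underline I la c0 ->
  (forall p, pr p = fst p \/ pr p = snd p) -> is_vw v ->
  (forall m c p, is_underline I m c -> In p (cups c) -> m (pr p) = v /\ forall x, (x = fst p \/ x = snd p) -> m x = v -> x = pr p) ->
  ~ block_defect_finite I la ->
  forall k, exists L, NoDup L /\ (forall x, In x L -> ray c0 x /\ la x = v) /\ (k <= length L)%nat.
Proof.
  intros Hw U0 Hpr Hvv Hv Hnb k. apply NNPP; intro N. apply Hnb. apply (ray_bound I la c0 v pr k); auto.
  intros L ND HL. destruct (Nat.lt_ge_cases (length L) k); auto. exfalso; apply N; eauto.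
Qed.

Definition Inv (I : Z -> Prop) la c0 k := exists M mu c LA LB,
  NoDup M /\ length M = S k /\
  (forall m, In m M -> is_weight I m /\ subw I m la /\ forall c', is_underline I m c' -> (degree c' la <= k)%nat) /\
  is_weight I mu /\ sim mu la /\ is_underline I mu c /\ oriented c la /\ degree c la = k /\
  (forall x, ray c x -> mu x = la x) /\
  (forall x, ray c x <-> ray c0 x /\ ~ In x LA /\ ~ In x LB) /\
  length LA = k /\ length LB = k /\ (forall x, In x LA -> la x = Wedge) /\ (forall x, In x LB -> la x = Vee).

Ltac splitc := repeat match goal with |- _ /\ _ => split end.

Lemma Inv0 I la c0 : is_weight I la -> is_underline I la c0 -> Inv I la c0 0.
Proof.
  intros Hw U0. exists [la], la, c0, [], [].
  splitc; auto.
  - constructor; auto. constructor.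
  - intros m [<-|[]]. splitc; auto.
    + split; [apply sim_refl|exists c0; split; auto; apply U0].
    + intros c' U'. destruct U' as [_ [_ D]]. lia.
  - apply sim_refl.
  - apply U0.
  - apply U0.
  - intros x; tauto.
  - intros x [].
  - intros x [].
Qed.

Lemma InvS I la c0 k : Inv I la c0 k ->
  (exists A, NoDup A /\ (forall x, In x A -> ray c0 x /\ la x = Wedge) /\ (S k <= length A)%nat) ->
  (exists B, NoDup B /\ (forall x, In x B -> ray c0 x /\ la x = Vee) /\ (S k <= length B)%nat) ->
  Inv I la c0 (S k).
Proof.
  intros [M [mu [c [LA [LB [NDM [LM [HM [Wmu [Smu [U [Ho [Dg [Rq [Rc [LLA [LLB [HLA HLB]]]]]]]]]]]]]]]]]]
    [A [NDA [HA LAk]]] [B [NDB [HB LBk]]].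
  destruct (pigeon A LA NDA ltac:(lia)) as [a [Ha Na]].
  destruct (pigeon B LB NDB ltac:(lia)) as [b [Hb Nb]].
  destruct (HA a Ha) as [R0a Wa]. destruct (HB b Hb) as [R0b Vb].
  assert (Ra : ray c a). { apply Rc. repeat split; auto. intro H. apply HLB in H. congruence. }
  assert (Rb : ray c b). { apply Rc. repeat split; auto. intro H. apply HLA in H. congruence. }
  assert (Ma : mu a = Wedge) by (rewrite Rq; auto).
  assert (Mb : mu b = Vee) by (rewrite Rq; auto).
  assert (Ucp := U). destruct U as [Hcd [Hom Hdm]].
  assert (Lab : a < b).
  { destruct (Z.lt_total a b) as [L|[E|G]]; auto. subst; congruence.
    exfalso. destruct Hom as [_ [_ [_ Hro]]]. apply (Hro b a); auto. }
  destruct (min_pair (fun x => ray c x /\ mu x = Wedge) (fun x => ray c x /\ mu x = Vee) a b Lab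
    (conj Ra Ma) (conj Rb Mb)) as [r [s [Lrs [[Rr Mr] [[Rs Ms] Hbt]]]]].
  assert (Nbt : forall t, r < t < s -> ~ ray c t).
  { intros t Ht Rt. destruct (Hbt t Ht) as [P1 P2]. destruct Hom as [_ [_ [Hrv _]]].
    destruct (Hrv t Rt); tauto. }
  set (mu' := swapf r s mu). set (c' := addc c r s).
  assert (Hcd' : is_cupdiag I c') by (apply add_cup_cd; auto).
  assert (Eo : forall x, x <> r -> x <> s -> mu' x = mu x) by (intros; apply swapf_o; auto).
  assert (Hom' : oriented c' mu').
  { apply (add_cup_or I c r s mu mu'); auto. left. unfold mu'. rewrite swapf_a, swapf_b; auto. }
  assert (Lr : la r = Wedge) by (rewrite <- Rq; auto).
  assert (Ls : la s = Vee) by (rewrite <- Rq; auto).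
  assert (Hol' : oriented c' la).
  { apply (add_cup_or I c r s la la); auto. }
  assert (Ne : forall p, In p (cups c) -> fst p <> r /\ fst p <> s).
  { intros p Hp. destruct Hcd as [_ [_ [_ Hr]]]. destruct (Hr r Rr) as [_ [N1 _]]. destruct (Hr s Rs) as [_ [N2 _]].
    assert (In (fst p) (endpoints c)) by (apply In_ep; exists p; auto). split; intro E; rewrite E in *; auto. }
  assert (Dm' : degree c' mu' = 0%nat).
  { unfold degree in *. simpl. unfold mu' at 1. rewrite swapf_a, Ms. simpl. rewrite <- Hdm. f_equal.
    apply filter_ext_in. intros p Hp. destruct (Ne p Hp). rewrite Eo; auto. }
  assert (U' : is_underline I mu' c') by (split; [exact Hcd'|split; [exact Hom'|exact Dm']]).
  assert (Dl' : degree c' la = S k).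
  { unfold degree in *. simpl. rewrite Lr. simpl. rewrite Dg. auto. }
  assert (Ir : I r /\ I s) by (destruct Hcd as [_ [_ [_ Hr]]]; split; apply Hr; auto).
  assert (Wmu' : is_weight I mu').
  { apply (weight_agree I mu mu' [r; s] Wmu).
    - intros x Hx. apply Eo; intro E; apply Hx; subst; simpl; auto.
    - intros x Hx. rewrite Eo by (intro E; subst; tauto). apply Wmu; auto. }
  assert (Smu' : sim mu' la) by (apply sim_swap_left; auto; red; auto).
  assert (NM : ~ In mu' M).
  { intro H. destruct (HM mu' H) as [_ [_ D]]. specialize (D c' U'). lia. }
  exists (mu' :: M), mu', c', (r :: LA), (s :: LB).
  splitc; auto.
  - constructor; auto.
  - simpl; lia.
  - intros m [<-|Hm].
    + splitc; auto. split; auto; exists c'; auto.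
      intros c'' U''. rewrite (ul_degree I mu' c'' c' la U'' U'). lia.
    + destruct (HM m Hm) as [A1 [A2 D]]. splitc; auto.
  - intros x [Rx [A1 A2]]. rewrite Eo; auto.
  - intros x; split.
    + intros [Rx [A1 A2]]. apply Rc in Rx as [R0 [N1 N2]]. splitc; auto; simpl; intros [E|E]; auto.
    + intros [R0 [N1 N2]]. simpl in N1, N2. unfold c', addc; simpl. splitc; [apply Rc; splitc; tauto|intro; subst; tauto|intro; subst; tauto].
  - simpl; lia.
  - simpl; lia.
  - intros x [<-|Hx]; auto.
  - intros x [<-|Hx]; auto.
Qed.

Lemma hypW (I : Z -> Prop) : forall m c p, is_underline I m c -> In p (cups c) ->
  m (snd p) = Wedge /\ forall x, (x = fst p \/ x = snd p) -> m x = Wedge -> x = snd p.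
Proof. intros m c p U Hp. destruct (ul_cup I m c p U Hp) as [A B]. split; auto.
  intros x [E|E] Mx; subst; auto; congruence. Qed.
Lemma hypV (I : Z -> Prop) : forall m c p, is_underline I m c -> In p (cups c) ->
  m (fst p) = Vee /\ forall x, (x = fst p \/ x = snd p) -> m x = Vee -> x = fst p.
Proof. intros m c p U Hp. destruct (ul_cup I m c p U Hp) as [A B]. split; auto.
  intros x [E|E] Mx; subst; auto; congruence. Qed.

Lemma part2a (I : Z -> Prop) la : is_weight I la -> finite_set (fun mu => is_weight I mu /\ subw I mu la) ->
  block_defect_finite I la.
Proof.
  intros Hw [l Hl]. apply NNPP; intro Hnb. destruct (ul_exists I la Hw) as [c0 U0].
  assert (RW := many_rays I la c0 Wedge snd Hw U0 (fun p => or_intror eq_refl) (or_intror eq_refl) (hypW I) Hnb).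
  assert (RV := many_rays I la c0 Vee fst Hw U0 (fun p => or_introl eq_refl) (or_introl eq_refl) (hypV I) Hnb).
  assert (Hinv : forall k, Inv I la c0 k).
  { induction k; [apply Inv0; auto|]. apply InvS; auto. }
  destruct (Hinv (length l)) as [M [_ [_ [_ [_ [NDM [LM [HM _]]]]]]]].
  assert (incl M l) by (intros m Hm; apply Hl; destruct (HM m Hm) as [A [B _]]; auto).
  assert (H' := NoDup_incl_length NDM H). lia.
Qed.

Theorem lemma2p4 (I : Z -> Prop) (HI : number_line I)
  (la : Z -> lab) (Hla : is_weight I la) :
  has_card (fun mu => is_weight I mu /\ subw I la mu) (2 ^ defect I la)%nat /\
  (finite_set (fun mu => is_weight I mu /\ subw I mu la) <->
   block_defect_finite I la) /\
  (forall j : Z,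
     finite_set (fun mu => is_weight I mu /\ sim mu la /\
       exists c, is_underline I mu c /\ oriented c la /\
                 Z.of_nat (degree c la) = j)).
Proof.
  split; [apply part1; auto|]. split; [split; [apply part2a; auto|apply part2b; auto]|].
  apply part3; auto.
Qed.
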